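(* Let $P$ and $N$ be holomorphic polynomial mappings on $\mathbb{C}^n$ (with values in finite-dimensional spaces) and let $r=\|P\|^2-\|N\|^2$. Then $r\in\mathcal{Q}$ if and only if there exist a holomorphic polynomial mapping $B$, not identically zero, and a linear mapping $L$ such that $I-L^*L$ is non-negative definite and $B\otimes N=L(B\otimes P)$.
   Context: $\mathcal{Q}$ is the set of Hermitian symmetric polynomials $r$ on $\mathbb{C}^n$ for which there are holomorphic polynomial mappings $F,G$, $G\not\equiv 0$, with $r(z,\overline z)=\|F(z)\|^2/\|G(z)\|^2$. For mappings $B$ and $P$ with values in $\mathbb{C}^a$, $\mathbb{C}^b$, $B\otimes P$ denotes the $\mathbb{C}^a\otimes\mathbb{C}^b$-valued mapping $z\mapsto B(z)\otimes P(z)$ (components $B_iP_j$), so $\|B\otimes P\|^2=\|B\|^2\|P\|^2$. *)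

(* Defs.v *)
From HB Require Import structures.
From mathcomp Require Import all_boot all_order all_algebra.
From mathcomp Require Import reals.
From mathcomp.real_closed Require Import complex.
From mathcomp Require Import mpoly.
Set Implicit Arguments. Unset Strict Implicit. Unset Printing Implicit Defensive.
Import GRing.Theory Num.Theory Num.Def.
Local Open Scope ring_scope.

(* A holomorphic polynomial mapping C^n -> C^k is a k-tuple of polynomials
   in the n complex variables z_1..z_n: F : 'I_k -> {mpoly C[n]}. *)

Section Defs.
Variable C : numClosedFieldType.

Definition peval n k (F : 'I_k -> {mpoly C[n]}) (z : 'I_n -> C) : 'cV[C]_k :=
  \col_i (F i).@[z].

Definition normsq k (v : 'cV[C]_k) : C := \sum_i v i 0 * (v i 0)^*.

(* tensor product u (x) v in C^a (x) C^b = C^(a*b), components u_i v_j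
   (ordered via mxvec) *)
Definition tens a b (u : 'cV[C]_a) (v : 'cV[C]_b) : 'cV[C]_(a * b) :=
  (mxvec (u *m v^T))^T.

Definition pmap_nonzero n k (F : 'I_k -> {mpoly C[n]}) : Prop :=
  exists i, F i != 0.

(* membership of the function z |-> r(z, conj z) in the class Q:
   r = ||F||^2 / ||G||^2 (wherever ||G|| != 0) for polynomial mappings F, G
   with G not identically zero *)
Definition inQ n (r : ('I_n -> C) -> C) : Prop :=
  exists (k l : nat) (F : 'I_k -> {mpoly C[n]}) (G : 'I_l -> {mpoly C[n]}),
    pmap_nonzero G /\
    forall z, normsq (peval G z) != 0 ->
      r z = normsq (peval F z) / normsq (peval G z).

Definition adjmx m p (A : 'M[C]_(m, p)) : 'M[C]_(p, m) := map_mx conjC A^T.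

Definition nonneg_definite m (A : 'M[C]_m) : Prop :=
  forall v : 'cV[C]_m, 0 <= (adjmx v *m A *m v) 0 0.

End Defs.

(* Main.v *)
Require Import Defs.
From HB Require Import structures.
From mathcomp Require Import all_boot all_order all_algebra.
From mathcomp Require Import reals.
From mathcomp.real_closed Require Import complex.
From mathcomp Require Import mpoly.
From mathcomp Require Import ring.
Import GRing.Theory Num.Theory.
Local Open Scope ring_scope.
Set Implicit Arguments. Unset Strict Implicit. Unset Printing Implicit Defensive.

Section Basics.
Variable C : numClosedFieldType.

Definition ip m (x y : 'cV[C]_m) : C := \sum_i x i 0 * (y i 0)^*.

Lemma normsq_ge0 m (v : 'cV[C]_m) : 0 <= normsq v.
Proof. by apply: sumr_ge0 => i _; rewrite -normCK exprn_ge0. Qed.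

Lemma normsq_eq0 m (v : 'cV[C]_m) : normsq v = 0 -> v = 0.
Proof.
move=> h; apply/matrixP => i j; rewrite ord1 mxE.
have H : forall k, true -> 0 <= v k 0 * (v k 0)^* by move=> k _; rewrite -normCK exprn_ge0.
have := psumr_eq0P H h (i:=i) isT.
by move/eqP; rewrite mul_conjC_eq0 => /eqP.
Qed.

Lemma adjmxM m n p (A : 'M[C]_(m, n)) (B : 'M[C]_(n, p)) :
  adjmx (A *m B) = adjmx B *m adjmx A.
Proof. by rewrite /adjmx trmx_mul map_mxM. Qed.

Lemma adjmxK m n (A : 'M[C]_(m, n)) : adjmx (adjmx A) = A.
Proof.
apply/matrixP => i j; rewrite !mxE; exact: conjCK.
Qed.

Lemma adjmxD m n (A B : 'M[C]_(m, n)) : adjmx (A + B) = adjmx A + adjmx B.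
Proof. by apply/matrixP => i j; rewrite !mxE rmorphD. Qed.

Lemma adjmxN m n (A : 'M[C]_(m, n)) : adjmx (- A) = - adjmx A.
Proof. by apply/matrixP => i j; rewrite !mxE rmorphN. Qed.

Lemma adjmxB m n (A B : 'M[C]_(m, n)) : adjmx (A - B) = adjmx A - adjmx B.
Proof. by rewrite adjmxD adjmxN. Qed.

Lemma adjmx1 m : adjmx (1%:M : 'M[C]_m) = 1%:M.
Proof. by rewrite /adjmx trmx1 map_mx1. Qed.

Lemma adjmxZ m n a (A : 'M[C]_(m, n)) : adjmx (a *: A) = a^* *: adjmx A.
Proof. by apply/matrixP => i j; rewrite !mxE rmorphM. Qed.

Lemma normsq_mx m (v : 'cV[C]_m) : normsq v = (adjmx v *m v) 0 0.
Proof. by rewrite /normsq mxE; apply: eq_bigr => i _; rewrite !mxE mulrC. Qed.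

Lemma normsq_mul m n (A : 'M[C]_(m, n)) x :
  normsq (A *m x) = (adjmx x *m (adjmx A *m A) *m x) 0 0.
Proof. by rewrite normsq_mx adjmxM !mulmxA. Qed.

Lemma quadE m (M : 'M[C]_m) (v : 'cV[C]_m) :
  (adjmx v *m M *m v) 0 0 = \sum_i \sum_j (v i 0)^* * M i j * v j 0.
Proof.
rewrite mxE (eq_bigr (fun j => \sum_i (v i 0)^* * M i j * v j 0)); last first.
  by move=> j _; rewrite !mxE big_distrl /=; apply: eq_bigr => i _; rewrite !mxE.
exact: exchange_big.
Qed.

End Basics.
Section Chol.
Variable C : numClosedFieldType.
Implicit Types m : nat.

Lemma ipDl m (x y z : 'cV[C]_m) : ip (x + y) z = ip x z + ip y z.
Proof. by rewrite /ip -big_split; apply: eq_bigr => i _; rewrite mxE mulrDl. Qed.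
Lemma ipDr m (x y z : 'cV[C]_m) : ip x (y + z) = ip x y + ip x z.
Proof. by rewrite /ip -big_split; apply: eq_bigr => i _; rewrite mxE rmorphD mulrDr. Qed.
Lemma ipZl m a (x y : 'cV[C]_m) : ip (a *: x) y = a * ip x y.
Proof. by rewrite /ip mulr_sumr; apply: eq_bigr => i _; rewrite mxE mulrA. Qed.
Lemma ipZr m a (x y : 'cV[C]_m) : ip x (a *: y) = a^* * ip x y.
Proof. by rewrite /ip mulr_sumr; apply: eq_bigr => i _; rewrite mxE rmorphM mulrCA. Qed.
Lemma ipNl m (x y : 'cV[C]_m) : ip (- x) y = - ip x y.
Proof. by rewrite -scaleN1r ipZl mulN1r. Qed.
Lemma ipBl m (x y z : 'cV[C]_m) : ip (x - y) z = ip x z - ip y z.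
Proof. by rewrite ipDl ipNl. Qed.
Lemma ipC m (x y : 'cV[C]_m) : ip x y = (ip y x)^*.
Proof. by rewrite /ip rmorph_sum; apply: eq_bigr => i _; rewrite rmorphM /= conjCK mulrC. Qed.
Lemma ip_delta m (x : 'cV[C]_m) c : ip x (delta_mx c 0) = x c 0.
Proof.
rewrite /ip (bigD1 c) //= big1 ?addr0; first by rewrite mxE !eqxx rmorph1 mulr1.
by move=> i /negbTE ne; rewrite mxE ne rmorph0 mulr0.
Qed.
Lemma ip0r m (x : 'cV[C]_m) : ip x 0 = 0.
Proof. by rewrite /ip big1 // => i _; rewrite mxE rmorph0 mulr0. Qed.

Lemma quad_ip m (M : 'M[C]_m) v : (adjmx v *m M *m v) 0 0 = ip (M *m v) v.
Proof. by rewrite -mulmxA mxE /ip; apply: eq_bigr => i _; rewrite !mxE mulrC. Qed.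

Definition psd m (M : 'M[C]_m) := forall v, 0 <= ip (M *m v) v.

Lemma hermE m (M : 'M[C]_m) : adjmx M = M -> forall i j, M j i = (M i j)^*.
Proof. by move=> h i j; rewrite -{1}h !mxE. Qed.

Lemma ip_col m (M : 'M[C]_m) c v : adjmx M = M -> ip (col c M) v = ((M *m v) c 0)^*.
Proof.
move=> h; have e : ip v (col c M) = (M *m v) c 0.
  by rewrite /ip mxE; apply: eq_bigr => i _; rewrite !mxE (hermE h c i) conjCK mulrC.
by rewrite ipC e.
Qed.

Lemma psd_diag m (M : 'M[C]_m) i : psd M -> 0 <= M i i.
Proof.
move=> h; have := h (delta_mx i 0); rewrite -colE ip_delta mxE //.
Qed.

Lemma real_conj (x : C) : 0 <= x -> x^* = x.
Proof. by move=> h; apply: conj_Creal; apply: ger0_real. Qed.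

Lemma psd_col0 m (M : 'M[C]_m) c : adjmx M = M -> psd M -> M c c = 0 ->
  forall j, M j c = 0.
Proof.
move=> hH hP a0 j; apply/eqP; apply/negPn/negP => nz.
set b := M j c.
set t := - (M j j + 1) / (2 * b).
have := hP (delta_mx j 0 + t *: delta_mx c 0).
rewrite mulmxDr -scalemxAr -!colE ipDl !ipDr !ipZl !ipZr !ip_delta !mxE a0.
rewrite (hermE hH j c) -/b.
have jj := psd_diag j hP.
have rj := real_conj jj.
have e1 : t * b = - (M j j + 1) / 2.
  by rewrite /t; field.
have e2 : t^* * b^* = - (M j j + 1) / 2.
  rewrite -rmorphM e1 mulNr rmorphN /= real_conj //.
  by apply: divr_ge0; rewrite ?ler0n // addr_ge0.
rewrite !mulr0 addr0 e1 e2.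
have -> : M j j + - (M j j + 1) / 2 + - (M j j + 1) / 2 = -1 by field.
by rewrite ler0N1.
Qed.

End Chol.
Section Chol2.
Variable C : numClosedFieldType.

Lemma colrowE m (M : 'M[C]_m) c i j : (col c M *m row c M) i j = M i c * M c j.
Proof. by rewrite mxE big_ord1 !mxE. Qed.

Lemma chol_step m (M : 'M[C]_m) c : adjmx M = M -> psd M ->
  let a := M c c in let M' := M - a^-1 *: (col c M *m row c M) in
  [/\ adjmx M' = M', psd M', (forall i, M' i c = 0),
      (forall j, (forall i, M i j = 0) -> forall i, M' i j = 0) &
      M = M' + ((sqrtC a)^-1 *: col c M) *m adjmx ((sqrtC a)^-1 *: col c M)].
Proof.
move=> hH hP a M'.
have a0 : 0 <= a by apply: psd_diag.
have ra : a^* = a by apply: real_conj.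
have rai : (a^-1)^* = a^-1 by apply: real_conj; rewrite invr_ge0.
have M'E : forall i j, M' i j = M i j - a^-1 * (M i c * M c j).
  by move=> i j; rewrite /M' !mxE big_ord1 !mxE.
split.
- apply/matrixP => i j; have -> : adjmx M' i j = (M' j i)^* by rewrite !mxE.
  rewrite M'E M'E rmorphB /= rmorphM /= rai.
  by rewrite rmorphM /= -(hermE hH j i) -(hermE hH j c) -(hermE hH c i) (mulrC (M c j)).
- have [az|anz] := eqVneq a 0.
    have e : M' = M by rewrite /M' az invr0 scale0r subr0.
    by move=> v; rewrite e; apply: hP.
  move=> v.
  set s := (M *m v) c 0.
  have eM' : M' *m v = M *m v - (a^-1 * s) *: col c M.
    rewrite /M' mulmxBl -scalemxAl -mulmxA -(row_mul c M v).
    have -> : row c (M *m v) = s%:M.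
      by apply/matrixP => i j; rewrite !ord1 mxE [s%:M 0 0]mxE eqxx mulr1n.
    by rewrite mul_mx_scalar scalerA.
  rewrite eM' ipBl ipZl ip_col //.
  set tau := - (a^-1 * s).
  have := hP (v + tau *: delta_mx c 0).
  rewrite mulmxDr -scalemxAr -colE ipDl !ipDr !ipZl !ipZr ip_delta ip_delta ip_col //.
  rewrite [col c M c 0]mxE -/a -/s.
  have -> : tau^* = - (a^-1 * s^*) by rewrite /tau rmorphN /= rmorphM /= rai.
  have -> : ip (M *m v) v + - (a^-1 * s^*) * s +
    (tau * s^* + tau * (- (a^-1 * s^*) * a)) = ip (M *m v) v - a^-1 * s * s^*.
    by rewrite /tau; field.
  by [].
- move=> i; rewrite M'E.
  have [az|anz] := eqVneq a 0.
    by rewrite (psd_col0 hH hP az) mul0r mulr0 subr0.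
  by rewrite -/a; field.
- by move=> j hj i; rewrite M'E hj (hj c) mulr0 mulr0 subr0.
- rewrite -scalemxAl adjmxZ -scalemxAr scalerA.
  have -> : adjmx (col c M) = row c M.
    by apply/matrixP => i j; rewrite !mxE (hermE hH c j) conjCK.
  have sr : ((sqrtC a)^-1)^* = (sqrtC a)^-1.
    by apply: real_conj; rewrite invr_ge0 sqrtC_ge0.
  by rewrite sr -expr2 exprVn sqrtCK /M' subrK.
Qed.

End Chol2.
Section Chol3.
Variable C : numClosedFieldType.

Lemma cholesky m (M : 'M[C]_m) : adjmx M = M -> psd M ->
  exists K (us : 'I_K -> 'cV[C]_m), M = \sum_(i < K) us i *m adjmx (us i).
Proof.
suff H : forall k (M : 'M[C]_m), adjmx M = M -> psd M ->
  (forall j : 'I_m, (k <= j)%N -> forall i, M i j = 0) ->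
  exists K (us : 'I_K -> 'cV[C]_m), M = \sum_(i < K) us i *m adjmx (us i).
  move=> hH hP; apply: (H m) => // j; rewrite leqNgt ltn_ord.
  done.
elim=> [|k IH] {}M hH hP hz.
  exists 0%N, (fun _ => 0); rewrite big_ord0; apply/matrixP => i j.
  by rewrite hz // mxE.
case: (ltnP k m) => km; last first.
  apply: IH => // j kj; apply: hz.
  by have := ltn_ord j; rewrite ltnNge (leq_trans km kj).
pose c := Ordinal km.
have [h1 h2 h3 h4 h5] := chol_step c hH hP.
set M' := M - _ in h1 h2 h3 h4 h5.
set u := _ *: col c M in h5.
have [K [us eus]] : exists K (us : 'I_K -> 'cV[C]_m), M' = \sum_(i < K) us i *m adjmx (us i).
  apply: IH => // j kj i.
  case: (eqVneq (j : nat) k) => ej.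
    by have -> : j = c by apply: val_inj.
  by apply: h4; apply: hz; rewrite ltn_neqAle eq_sym ej kj.
exists K.+1, (fun i => if unlift ord0 i is Some j then us j else u).
by rewrite big_ord_recl unlift_none h5 eus addrC; congr (_ + _); apply: eq_bigr => i _; rewrite liftK.
Qed.

End Chol3.
Section Tens.
Variable C : numClosedFieldType.

Lemma mxBE m n (A B : 'M[C]_(m, n)) i j : (A - B) i j = A i j - B i j.
Proof. by rewrite !mxE. Qed.

Lemma sum_mxvec a b (G : 'I_(a * b) -> C) :
  \sum_k G k = \sum_i \sum_j G (mxvec_index i j).
Proof.
rewrite pair_big /=.
have hb : bijective (fun p : 'I_a * 'I_b => mxvec_index p.1 p.2).
  apply: inj_card_bij; last by rewrite card_prod !card_ord.
  move=> [i j] [i' j'] /= /(congr1 val) /= /val_inj /enum_rank_inj.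
  done.
by rewrite (reindex _ (onW_bij _ hb)).
Qed.

Lemma normsq_tens a b (u : 'cV[C]_a) (v : 'cV[C]_b) :
  normsq (tens u v) = normsq u * normsq v.
Proof.
rewrite /normsq /tens sum_mxvec big_distrl /=; apply: eq_bigr => i _.
rewrite big_distrr /=; apply: eq_bigr => j _.
rewrite !mxE mxvecE !mxE big_ord1 !mxE rmorphM /=.
by rewrite mulrACA.
Qed.

Definition tensmp n a b (B : 'I_a -> {mpoly C[n]}) (P : 'I_b -> {mpoly C[n]}) :
  'I_(a * b) -> {mpoly C[n]} := fun k => mxvec (\matrix_(i, j) (B i * P j)) 0 k.

Lemma peval_tens n a b (B : 'I_a -> {mpoly C[n]}) (P : 'I_b -> {mpoly C[n]}) z :
  peval (tensmp B P) z = tens (peval B z) (peval P z).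
Proof.
apply/matrixP => k j; rewrite ord1 /tens /tensmp !mxE.
case/mxvec_indexP: k => i l; rewrite !mxvecE !mxE big_ord1 !mxE mevalM.
done.
Qed.

Lemma tens0 a b (v : 'cV[C]_b) : tens (0 : 'cV[C]_a) v = 0.
Proof. by rewrite /tens mul0mx linear0 trmx0. Qed.

Lemma dir2 n a b c (P : 'I_b -> {mpoly C[n]}) (N : 'I_c -> {mpoly C[n]})
  (B : 'I_a -> {mpoly C[n]}) (L : 'M[C]_(a * c, a * b)) :
  pmap_nonzero B -> nonneg_definite (1%:M - adjmx L *m L) ->
  (forall z, tens (peval B z) (peval N z) = L *m tens (peval B z) (peval P z)) ->
  inQ (fun z => normsq (peval P z) - normsq (peval N z)).
Proof.
move=> hB hM hL.
set M := 1%:M - adjmx L *m L.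
have hH : adjmx M = M by rewrite /M adjmxB adjmx1 adjmxM adjmxK.
have hP : psd M by move=> v; rewrite -quad_ip; apply: hM.
have [K [us eM]] := cholesky hH hP.
pose F := fun i : 'I_K => \sum_k ((us i) k 0)^* *: tensmp B P k.
exists K, a, F, B; split => // z nz.
set w := tens (peval B z) (peval P z).
have eF : forall i, (peval F z) i 0 = (adjmx (us i) *m w) 0 0.
  move=> i; rewrite !mxE /F raddf_sum /=; apply: eq_bigr => k _.
  rewrite mevalZ !mxE; congr (_ * _).
  by have := peval_tens B P z; move/matrixP/(_ k 0); rewrite !mxE.
have e1 : normsq (peval F z) = (adjmx w *m M *m w) 0 0.
  rewrite eM mulmx_sumr mulmx_suml summxE /normsq; apply: eq_bigr => i _.
  rewrite eF mulmxA -mulmxA [RHS]mxE big_ord1.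
  have -> : (adjmx w *m us i) 0 0 = ((adjmx (us i) *m w) 0 0)^*.
    by rewrite -{1}(adjmxK (us i)) -adjmxM; set X := (adjmx (us i) *m w); rewrite !mxE.
  by rewrite mulrC.
have e2 : (adjmx w *m M *m w) 0 0 = normsq w - normsq (L *m w).
  rewrite /M mulmxBr mulmxBl mulmx1 mxBE normsq_mul normsq_mx.
  by rewrite mulmxA.
rewrite e2 -hL !normsq_tens in e1.
rewrite e1; field.
by move: nz; apply: contra => /eqP ->.
Qed.

End Tens.
From mathcomp Require Import zify.
Section Biv.
Variable C : numClosedFieldType.

Lemma inf_roots (p : {poly C}) (f : nat -> C) :
  injective f -> (forall t, p.[f t] = 0) -> p = 0.
Proof.
move=> fi h; apply/eqP; apply/negPn/negP => nz.
set rs := map f (iota 0 (size p)).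
have H1 : all (root p) rs by apply/allP => x /mapP [t _ ->]; rewrite /root h.
have H2 : uniq rs by rewrite map_inj_uniq // iota_uniq.
by have := max_poly_roots nz H1 H2; rewrite size_map size_iota ltnn.
Qed.

Definition ut (t : nat) : C := (t%:R + 'i) / (t%:R - 'i).

Lemma tBi_neq0 (t : nat) : (t%:R - 'i : C) != 0.
Proof.
apply/negP; rewrite subr_eq0 => /eqP e.
have : ('i : C)^* = 'i by rewrite -e rmorph_nat.
by rewrite conjCi => /eqP; rewrite eq_sym -addr_eq0 -mulr2n mulrn_eq0 /= (negbTE (neq0Ci C)).
Qed.

Lemma tDi_neq0 (t : nat) : (t%:R + 'i : C) != 0.
Proof.
apply/negP; rewrite addr_eq0 => /eqP e.
have ei : ('i : C) = - t%:R by rewrite e opprK.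
have : ('i : C)^* = 'i by rewrite ei rmorphN /= rmorph_nat.
by rewrite conjCi => /eqP; rewrite eq_sym -addr_eq0 -mulr2n mulrn_eq0 /= (negbTE (neq0Ci C)).
Qed.

Lemma ut_unit t : ut t * (ut t)^* = 1.
Proof.
rewrite /ut rmorphM /= fmorphV /= rmorphB rmorphD /= rmorph_nat conjCi.
have h1 := tBi_neq0 t; have h2 := tDi_neq0 t.
by rewrite opprK; field; apply/andP; split.
Qed.

End Biv.
Section Biv2.
Variable C : numClosedFieldType.

Lemma ut_inj : injective (@ut C).
Proof.
move=> t t' /eqP; rewrite /ut eqr_div ?tBi_neq0 // => /eqP e.
have h : (t%:R + 'i) * (t'%:R - 'i) - (t'%:R + 'i) * (t%:R - 'i) = 0 :> C by rewrite e subrr.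
have h2 : (t%:R + 'i) * (t'%:R - 'i) - (t'%:R + 'i) * (t%:R - 'i) =
   ('i *+ 2) * (t'%:R - t%:R) :> C by ring.
move: h; rewrite h2 => /eqP; rewrite mulf_eq0 mulrn_eq0 /= (negbTE (neq0Ci C)) /=.
by rewrite subr_eq0 eqr_nat => /eqP.
Qed.

Lemma natr_inj : injective (fun t : nat => t%:R : C).
Proof. by move=> t t' /eqP; rewrite eqr_nat => /eqP. Qed.

Definition eval2 (K : {poly {poly C}}) (x y : C) := (K.[x%:P]).[y].

Lemma eval2E (K : {poly {poly C}}) (x y : C) N : (size K <= N)%N -> (forall j, leq (size K`_j) N) ->
  eval2 K x y = \sum_(j < N) \sum_(k < N) (K`_j)`_k * x ^+ j * y ^+ k.
Proof.
move=> hK hj; rewrite /eval2 (horner_coef_wide _ hK) horner_sum.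
apply: eq_bigr => j _; rewrite -rmorphXn hornerM hornerC (horner_coef_wide _ (hj j)).
rewrite mulr_suml; apply: eq_bigr => k _; ring.
Qed.

Lemma biv_zero (K : {poly {poly C}}) : (forall s, eval2 K s s^* = 0) -> K = 0.
Proof.
move=> h.
pose N := maxn (size K) (\max_(j < size K) size (nth (0%R : {poly C}) K j)).
have hK : (size K <= N)%N by rewrite leq_maxl.
have hj : forall j, leq (size K`_j) N.
  move=> j; case: (ltnP j (size K)) => hjk.
    apply: leq_trans (leq_maxr _ _).
    exact: (leq_bigmax (Ordinal hjk)).
  by rewrite nth_default // size_poly0.
pose a j k := (K`_j)`_k.
have s1 : forall (u : C) e, u * u^* = 1 ->
   \sum_(j < N) \sum_(k < N) a j k * u ^+ j * u^* ^+ k * (j + k == e)%N%:R = 0.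
  move=> u e hu.
  pose p := \sum_(j < N) \sum_(k < N) (a j k * u ^+ j * u^* ^+ k) *: 'X^(j + k)%N.
  have p0 : p = 0.
    apply: (inf_roots natr_inj) => t.
    have := h (t%:R * u); rewrite (eval2E _ _ hK hj) => <-.
    rewrite horner_sum; apply: eq_bigr => j _; rewrite horner_sum; apply: eq_bigr => k _.
    rewrite hornerZ hornerXn rmorphM /= rmorph_nat !exprMn exprD /a; ring.
  apply: (@etrans _ _ (p`_e)); last by rewrite p0 coef0.
  rewrite /p coef_sum.
  apply: eq_bigr => j _; rewrite coef_sum; apply: eq_bigr => k _.
  by rewrite coefZ coefXn [e == _]eq_sym.
have s2 : forall e j0, (j0 < N)%N ->
   \sum_(j < N) \sum_(k < N) a j k * (j + k == e)%N%:R * (j + j == j0 + j0)%N%:R = 0.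
  move=> e j0 hj0.
  pose q := \sum_(j < N) \sum_(k < N) (a j k * (j + k == e)%N%:R) *: 'X^(j + j)%N.
  have q0 : q = 0.
    apply: (inf_roots ut_inj) => t.
    have := s1 (ut C t) e (ut_unit C t) => /(congr1 (fun x => x * ut C t ^+ e)); rewrite mul0r => <-.
    rewrite mulr_suml horner_sum; apply: eq_bigr => j _.
    rewrite mulr_suml horner_sum; apply: eq_bigr => k _.
    rewrite hornerZ hornerXn.
    case: (eqVneq (j + k)%N e) => [<-|ne]; last by rewrite /= mulr0n !mulr0 !mul0r.
    rewrite /= !mulr1n.
    set x := ut C t; set y := x^*.
    have hyk : y ^+ k * x ^+ k = 1 by rewrite -exprMn mulrC (ut_unit C t) expr1n.
    have e2 : a j k * x ^+ j * y ^+ k * x ^+ (j + k) = a j k * x ^+ (j + j) * (y ^+ k * x ^+ k).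
      by rewrite !exprD; ring.
    by rewrite !mulr1 e2 hyk mulr1.
  apply: (@etrans _ _ (q`_(j0 + j0)%N)); last by rewrite q0 coef0.
  rewrite /q coef_sum.
  apply: eq_bigr => j _; rewrite coef_sum; apply: eq_bigr => k _.
  by rewrite coefZ coefXn [(j0 + j0)%N == _]eq_sym.
have s3 : forall j0 k0, (j0 < N)%N -> (k0 < N)%N -> a j0 k0 = 0.
  move=> j0 k0 hj0 hk0.
  have := s2 (j0 + k0)%N j0 hj0.
  rewrite (bigD1 (Ordinal hj0)) //= [X in _ + X = _]big1 ?addr0; last first.
    move=> j /eqP nj; apply: big1 => k _.
    have -> : (j + j == j0 + j0)%N = false.
      apply/eqP => e; apply: nj; apply: val_inj => /=; lia.
    by rewrite mulr0.
  rewrite (bigD1 (Ordinal hk0)) //= [X in _ + X = _]big1 ?addr0; last first.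
    move=> k /eqP nk.
    have -> : (j0 + k == j0 + k0)%N = false.
      apply/eqP => e; apply: nk; apply: val_inj => /=; lia.
    by rewrite mulr0 mul0r.
  by rewrite !eqxx !mulr1.
apply/polyP => j; rewrite coef0; apply/polyP => k; rewrite coef0.
case: (ltnP j N) => hjN; last by rewrite (nth_default _ (leq_trans hK hjN)) coef0.
case: (ltnP k N) => hkN; last by rewrite (nth_default _ (leq_trans (hj j) hkN)).
exact: s3.
Qed.

End Biv2.
Section Polar.
Variable C : numClosedFieldType.
Variable n : nat.
Local Notation mp := {mpoly C[n]}.

Lemma eval2D (A B : {poly {poly C}}) x y : eval2 (A + B) x y = eval2 A x y + eval2 B x y.
Proof. by rewrite /eval2 !hornerD. Qed.
Lemma eval2N (A : {poly {poly C}}) x y : eval2 (- A) x y = - eval2 A x y.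
Proof. by rewrite /eval2 !hornerN. Qed.
Lemma eval2B (A B : {poly {poly C}}) x y : eval2 (A - B) x y = eval2 A x y - eval2 B x y.
Proof. by rewrite eval2D eval2N. Qed.
Lemma eval2M (A B : {poly {poly C}}) x y : eval2 (A * B) x y = eval2 A x y * eval2 B x y.
Proof. by rewrite /eval2 !hornerM. Qed.

Definition Herm k (q : 'I_k -> {poly C}) : {poly {poly C}} :=
  \sum_i map_poly polyC (q i) * (map_poly Num.conj_op (q i))%:P.

Lemma eval2_Herm k (q : 'I_k -> {poly C}) x t :
  eval2 (Herm q) x t^* = \sum_i (q i).[x] * ((q i).[t])^*.
Proof.
rewrite /eval2 /Herm !horner_sum; apply: eq_bigr => i _.
rewrite hornerM hornerC (horner_map polyC) hornerM hornerC.
by rewrite (horner_map Num.conj_op).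
Qed.

Definition lin (z w : 'I_n -> C) : 'I_n -> {poly C} :=
  fun j => (z j)%:P + (w j - z j) *: 'X.

Definition pt (z w : 'I_n -> C) (s : C) : 'I_n -> C := fun j => z j + s * (w j - z j).

Lemma lin_eval z w (F : mp) s :
  (mmap polyC (lin z w) F).[s] = F.@[pt z w s].
Proof.
rewrite /mmap mevalE horner_sum; apply: eq_bigr => m _.
rewrite hornerM hornerC /mmap1 horner_prod; congr (_ * _); apply: eq_bigr => i _.
by rewrite horner_exp /lin hornerD hornerC hornerZ hornerX /pt mulrC.
Qed.

Lemma peval_eq k (F : 'I_k -> mp) v1 v2 : v1 =1 v2 -> peval F v1 = peval F v2.
Proof. by move=> e; apply/matrixP => i j; rewrite !mxE (meval_eq _ e). Qed.

Lemma eval2_lin k (F : 'I_k -> mp) z w x t :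
  eval2 (Herm (fun i => mmap polyC (lin z w) (F i))) x t^* =
  ip (peval F (pt z w x)) (peval F (pt z w t)).
Proof.
rewrite eval2_Herm /ip; apply: eq_bigr => i _; rewrite !lin_eval !mxE.
done.
Qed.

Lemma polar m p l (f : 'I_m -> mp) (g : 'I_p -> mp) (G : 'I_l -> mp) :
  (forall v, normsq (peval G v) * (normsq (peval f v) - normsq (peval g v)) = 0) ->
  forall z w, normsq (peval G z) != 0 ->
  ip (peval f z) (peval f w) = ip (peval g z) (peval g w).
Proof.
move=> h z w nz.
pose H k (F : 'I_k -> mp) := Herm (fun i => mmap polyC (lin z w) (F i)).
have pz : pt z w 0 =1 z by move=> j; rewrite /pt mul0r addr0.
have pw : pt z w 1 =1 w by move=> j; rewrite /pt mul1r addrC subrK.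
have K0 : H _ G * (H _ f - H _ g) = 0.
  apply: biv_zero => s; rewrite eval2M eval2B !eval2_lin.
  exact: h.
have HG : H _ G != 0.
  apply/negP => /eqP e; move: nz.
  have := congr1 (fun A => eval2 A 0 0^*) e.
  rewrite /= eval2_lin /eval2 !horner0 => e2.
  have en : forall k (v : 'cV[C]_k), normsq v = ip v v by [].
  by rewrite -(peval_eq G pz) en e2 eqxx.
move: K0 => /eqP; rewrite mulf_eq0 (negbTE HG) /= subr_eq0 => /eqP e.
have := congr1 (fun A => eval2 A 0 1^*) e.
rewrite /= !eval2_lin.
by rewrite !(peval_eq _ pz) !(peval_eq _ pw).
Qed.

End Polar.
From Stdlib Require Classical_Prop.
Section LinAlg.
Variable C : numClosedFieldType.

Lemma ex_max (P : nat -> Prop) m : P 0%N -> (forall r, P r -> (r <= m)%N) ->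
  exists r, P r /\ forall r', P r' -> (r' <= r)%N.
Proof.
move=> P0 hb.
suff H : forall k r, P r -> (m - r <= k)%N -> exists r0, P r0 /\ forall r', P r' -> (r' <= r0)%N.
  by apply: (H m 0%N) => //; rewrite subn0.
elim=> [|k IH] r Pr hk.
  exists r; split => // r' Pr'; apply: leq_trans (hb _ Pr') _; lia.
case: (Classical_Prop.classic (exists r', P r' /\ (r < r')%N)) => [[r' [Pr' lt]]|nex].
  apply: (IH r') => //; have := hb _ Pr'; lia.
exists r; split => // r' Pr'; rewrite leqNgt; apply/negP => lt; apply: nex; by exists r'.
Qed.

Definition mat_of (T : Type) d q (h : T -> 'cV[C]_d) (pts : 'I_q -> T) : 'M[C]_(d, q) :=
  \matrix_(k, j) h (pts j) k 0.

Definition ext (T : Type) q (pts : 'I_q -> T) (s : T) : 'I_(q + 1) -> T :=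
  fun k => match split k with inl i => pts i | inr _ => s end.

Lemma mat_of_ext (T : Type) d q (h : T -> 'cV[C]_d) pts s :
  mat_of h (@ext T q pts s) = row_mx (mat_of h pts) (h s).
Proof.
apply/matrixP => k j; rewrite -(splitK j); case: (split j) => i.
  by rewrite row_mxEl !mxE /ext unsplitK.
by rewrite row_mxEr !mxE /ext unsplitK ord1.
Qed.

Lemma gram (T : Type) (S : T -> Prop) m p q (fv : T -> 'cV[C]_m) (gv : T -> 'cV[C]_p)
  (pts : 'I_q -> T) :
  (forall s t, S s -> S t -> ip (fv s) (fv t) = ip (gv s) (gv t)) ->
  (forall j, S (pts j)) ->
  adjmx (mat_of fv pts) *m mat_of fv pts = adjmx (mat_of gv pts) *m mat_of gv pts.
Proof.
move=> h hp; apply/matrixP => i j; rewrite !mxE.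
have e : forall d (hh : T -> 'cV[C]_d), \sum_k adjmx (mat_of hh pts) i k * mat_of hh pts k j
   = ip (hh (pts j)) (hh (pts i)).
  by move=> d hh; rewrite /ip; apply: eq_bigr => k _; rewrite !mxE mulrC.
by rewrite e e h.
Qed.

End LinAlg.
Section LinAlg2.
Variable C : numClosedFieldType.

Lemma rowfree_ext m r (A : 'M[C]_(r, m)) (v : 'rV[C]_m) :
  row_free A -> ~~ row_free (col_mx A v) -> exists c : 'rV_r, v = c *m A.
Proof.
move=> hA hn.
have [sub|nsub] := boolP (v <= A)%MS; first by case/submxP: sub => c ->; exists c.
case/negP: hn; apply: inj_row_free => u hu.
rewrite -(hsubmxK u) mul_row_col in hu.
set u1 := lsubmx u in hu *; set u2 := rsubmx u in hu *.
have e2 : u2 = (u2 0 0)%:M by apply: mx11_scalar.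
rewrite e2 mul_scalar_mx in hu.
have [c0|cn] := eqVneq (u2 0 0) 0.
  rewrite c0 scale0r addr0 in hu.
  have u10 : u1 = 0 by apply: (row_free_inj hA); rewrite hu mul0mx.
  have z0 : (0 : C)%:M = 0 :> 'M[C]_1 by apply/matrixP => i j; rewrite !mxE mul0rn.
  by rewrite -(hsubmxK u) -/u1 -/u2 u10 e2 c0 z0 row_mx0.
case/negP: nsub; apply/submxP; exists (- (u2 0 0)^-1 *: u1).
rewrite -scalemxAl; apply: (scalerI cn); rewrite scalerA mulrN mulfV // scaleN1r.
by apply/eqP; rewrite -addr_eq0 addrC hu.
Qed.

End LinAlg2.
Section LinAlg3.
Variable C : numClosedFieldType.

Lemma adjmx_inv m (A : 'M[C]_m) : adjmx (invmx A) = invmx (adjmx A).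
Proof. by rewrite /adjmx trmx_inv map_invmx. Qed.

Lemma linalg (T : Type) (t0 : T) (S : T -> Prop) m p (fv : T -> 'cV[C]_m)
  (gv : T -> 'cV[C]_p) :
  (forall s t, S s -> S t -> ip (fv s) (fv t) = ip (gv s) (gv t)) ->
  exists U : 'M[C]_(p, m), (forall s, S s -> U *m fv s = gv s) /\
    forall x, normsq (U *m x) <= normsq x.
Proof.
move=> h.
pose P r := exists pts : 'I_r -> T, (forall j, S (pts j)) /\ row_free (mat_of fv pts)^T.
have P0 : P 0%N.
  exists (fun _ => t0); split; first by case.
  by rewrite /row_free (flatmx0 (mat_of fv _)^T) mxrank0.
have hb : forall r, P r -> (r <= m)%N.
  by move=> r [pts [_ hr]]; have := rank_leq_col (mat_of fv pts)^T; rewrite (eqP hr).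
have [r [[pts [hS hr]] hmax]] := ex_max P0 hb.
set Fm := mat_of fv pts; set Gm := mat_of gv pts.
set G := adjmx Fm *m Fm.
have hG : G = adjmx Gm *m Gm := gram h hS.
have Gu : G \in unitmx.
  rewrite -row_free_unit; apply: inj_row_free => u hu.
  have e : normsq (Fm *m adjmx u) = 0.
    by rewrite normsq_mul adjmxK -/G hu mul0mx mxE.
  have hz := normsq_eq0 e.
  have h2 : map_mx Num.conj_op u *m Fm^T = 0 *m Fm^T.
    have := congr1 trmx hz; rewrite trmx_mul /adjmx -map_trmx trmxK trmx0 => ->.
    by rewrite mul0mx.
  have := row_free_inj hr h2 => /matrixP h3; apply/matrixP => i j.
  by have := h3 i j; rewrite !mxE => /eqP; rewrite conjC_eq0 => /eqP.
set Gi := invmx G.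
have GH : adjmx G = G by rewrite /G adjmxM adjmxK.
have Gia : adjmx Gi = Gi by rewrite /Gi adjmx_inv GH.
exists (Gm *m Gi *m adjmx Fm); split.
- move=> s Ss.
  have hS' : forall j, S (ext pts s j) by move=> j; rewrite /ext; case: (split j).
  have [c hc] : exists c : 'rV_r, (fv s)^T = c *m Fm^T.
    apply: rowfree_ext hr _; apply/negP => hf.
    have : (r + 1 <= r)%N.
      apply: hmax; exists (ext pts s); split => //.
      by rewrite mat_of_ext tr_row_mx.
    by rewrite addn1 ltnn.
  have fE : fv s = Fm *m c^T by rewrite -[fv s]trmxK hc trmx_mul trmxK.
  pose d : 'cV[C]_(r + 1) := col_mx (- c^T) 1%:M.
  have Fd : mat_of fv (ext pts s) *m d = 0.
    by rewrite mat_of_ext mul_row_col mulmx1 fE mulmxN addNr.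
  have Gd : mat_of gv (ext pts s) *m d = 0.
    apply: normsq_eq0; rewrite normsq_mul -(gram h hS') -normsq_mul Fd.
    by rewrite /normsq big1 // => i _; rewrite mxE mul0r.
  have gE : gv s = Gm *m c^T.
    by move: Gd; rewrite mat_of_ext mul_row_col mulmx1 mulmxN addrC => /eqP; rewrite subr_eq0 => /eqP.
  rewrite fE gE -!mulmxA (mulmxA (adjmx Fm)) -/G (mulmxA Gi) mulVmx //.
  by rewrite mul1mx.
- move=> x.
  set U := Gm *m Gi *m adjmx Fm.
  set Pj := Fm *m Gi *m adjmx Fm.
  have UU : adjmx U *m U = Pj.
    rewrite /U !adjmxM adjmxK Gia !mulmxA -(mulmxA _ (adjmx Gm) Gm) -hG.
    by rewrite -(mulmxA Fm Gi G) mulVmx // mulmx1.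
  have PP : adjmx Pj = Pj by rewrite /Pj !adjmxM adjmxK Gia mulmxA.
  have Pid : Pj *m Pj = Pj.
    rewrite /Pj !mulmxA -(mulmxA _ (adjmx Fm) Fm) -/G.
    by rewrite -(mulmxA Fm Gi G) mulVmx // mulmx1.
  set W := 1%:M - Pj.
  have WW : adjmx W *m W = W.
    rewrite /W adjmxB adjmx1 PP mulmxBl mulmxBr mulmx1 mul1mx mulmxBr mulmx1 Pid.
    by rewrite subrr subr0.
  have e : normsq x = normsq (U *m x) + normsq (W *m x).
    rewrite !normsq_mul UU WW normsq_mx /W mulmxBr mulmxBl mulmx1 mxBE.
    by rewrite addrC subrK.
  by rewrite e lerDl normsq_ge0.
Qed.

End LinAlg3.
Section Main.
Variable C : numClosedFieldType.

Lemma normsq_col m1 m2 (u : 'cV[C]_m1) (v : 'cV[C]_m2) :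
  normsq (col_mx u v) = normsq u + normsq v.
Proof.
rewrite /normsq big_split_ord /=; congr (_ + _); apply: eq_bigr => i _.
  by rewrite col_mxEu.
by rewrite col_mxEd.
Qed.

Lemma dir1 n b c (P : 'I_b -> {mpoly C[n]}) (N : 'I_c -> {mpoly C[n]}) :
  inQ (fun z => normsq (peval P z) - normsq (peval N z)) ->
  exists (a : nat) (B : 'I_a -> {mpoly C[n]}) (L : 'M[C]_(a * c, a * b)),
    [/\ pmap_nonzero B,
        nonneg_definite (1%:M - adjmx L *m L) &
        forall z : 'I_n -> C,
          tens (peval B z) (peval N z) = L *m tens (peval B z) (peval P z)].
Proof.
move=> [k [l [F [G [hG hF]]]]].
pose f := tensmp G P.
pose g : 'I_(l * c + k) -> {mpoly C[n]} :=
  fun i => match split i with inl j => tensmp G N j | inr j => F j end.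
have gE : forall z, peval g z = col_mx (tens (peval G z) (peval N z)) (peval F z).
  move=> z; rewrite -peval_tens; apply/matrixP => i j; rewrite -(splitK i).
  case: (split i) => i'.
    by rewrite col_mxEu !mxE /g unsplitK.
  by rewrite col_mxEd !mxE /g unsplitK.
have H0 : forall v, normsq (peval G v) * (normsq (peval f v) - normsq (peval g v)) = 0.
  move=> v; rewrite gE normsq_col /f peval_tens !normsq_tens.
  have [z0|nz] := eqVneq (normsq (peval G v)) 0; first by rewrite z0 mul0r.
  have := hF v nz => /= e.
  have -> : normsq (peval G v) * normsq (peval P v) -
     (normsq (peval G v) * normsq (peval N v) + normsq (peval F v)) =
     normsq (peval G v) * (normsq (peval P v) - normsq (peval N v)) - normsq (peval F v).
    by ring.
  rewrite e; field => //.
have pol := polar H0.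
have [U [hU1 hU2]] := @linalg C _ (fun _ => 0) (fun z => normsq (peval G z) != 0) _ _
   (fun z => peval f z) (fun z => peval g z) (fun s t hs _ => pol s t hs).
exists l, G, (usubmx U); split => //.
- move=> x; rewrite mulmxBr mulmxBl mulmx1 mxBE -normsq_mx -normsq_mul.
  rewrite subr_ge0; apply: Order.POrderTheory.le_trans (hU2 x).
  rewrite -{2}(vsubmxK U) mul_col_mx normsq_col lerDl.
  exact: normsq_ge0.
- move=> z.
  have [z0|nz] := eqVneq (normsq (peval G z)) 0.
    by rewrite (normsq_eq0 z0) !tens0 mulmx0.
  by rewrite -(peval_tens G P) -/f mul_usub_mx hU1 // gE col_mxKu.
Qed.

End Main.

Unset Implicit Arguments.

Theorem proposition3p1 (R : realType) (n b c : nat)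
  (P : 'I_b -> {mpoly R[i][n]}) (N : 'I_c -> {mpoly R[i][n]}) :
  inQ (fun z => normsq (peval P z) - normsq (peval N z)) <->
  exists (a : nat) (B : 'I_a -> {mpoly R[i][n]}) (L : 'M[R[i]]_(a * c, a * b)),
    [/\ pmap_nonzero B,
        nonneg_definite (1%:M - adjmx L *m L) &
        forall z : 'I_n -> R[i],
          tens (peval B z) (peval N z) = L *m tens (peval B z) (peval P z)].
Proof.
split; first exact: dir1.
by move=> [a [B [L [h1 h2 h3]]]]; apply: (dir2 h1 h2 h3).
Qed.
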